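(* Let $B$ be a finite index subring of a finite product of principal ideal domains. Let $N$ be a quadratically presented $B$-module such that $\mathrm{Fitt}_B(N)=(x)$ for some non-zerodivisor $x\in B$, and suppose $B/(x)$ is finite. Then $N$ is finite and $\#N=\#B/(x)$.
   Context: A module $N$ over a commutative ring $B$ is quadratically presented if there exist $m\ge1$ and an exact sequence $B^m\to B^m\to N\to0$. $\mathrm{Fitt}_B$ denotes the $0$th Fitting ideal. *)

(* Defs.v *)
From HB Require Import structures.
From mathcomp Require Import all_boot all_order all_algebra.
Set Implicit Arguments. Unset Strict Implicit. Unset Printing Implicit Defensive.
Import Order.TTheory GRing.Theory Num.Theory.
Local Open Scope ring_scope.

Definition is_ideal (R : comPzRingType) (I : R -> Prop) : Prop :=
  [/\ I 0, (forall a b, I a -> I b -> I (a + b)), (forall a, I a -> I (- a))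
    & (forall r a, I a -> I (r * a))].

Definition is_PID (R : idomainType) : Prop :=
  forall I : R -> Prop, is_ideal I -> exists d : R, forall a, I a <-> exists r, a = r * d.

(* B is (isomorphic to) a finite index subring of the finite product
   prod_{i < n} R i of PIDs: phi = (phi i)_i is an injective ring morphism
   B -> prod_i R i whose image has finite index (as additive subgroup). *)
Definition finite_index_subring_of_prod (B : comPzRingType) (n : nat)
  (R : 'I_n -> idomainType) (phi : forall i, {rmorphism B -> R i}) : Prop :=
  (forall a b : B, (forall i, phi i a = phi i b) -> a = b) /\
  exists (k : nat) (F : 'I_k -> forall i, R i),
    forall y : forall i, R i, exists (j : 'I_k) (b : B), forall i, y i = F j i + phi i b.

(* (g, A) is a finite presentation B^k --A--> B^m --g--> N --> 0 (row-vector convention):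
   g is surjective and its kernel is the row space of A. *)
Definition is_presentation (B : comPzRingType) (N : lmodType B) (k m : nat)
  (A : 'M[B]_(k, m)) (g : {linear 'rV[B]_m -> N}) : Prop :=
  (forall y : N, exists v, g v = y) /\
  (forall v : 'rV[B]_m, g v = 0 <-> exists u : 'rV[B]_k, v = u *m A).

Definition quadratically_presented (B : comPzRingType) (N : lmodType B) : Prop :=
  exists (m : nat) (A : 'M[B]_m) (g : {linear 'rV[B]_m -> N}),
    (1 <= m)%N /\ is_presentation A g.

(* The ideal of B generated by the m x m minors of a k x m matrix A. *)
Definition minor_ideal (B : comPzRingType) (k m : nat) (A : 'M[B]_(k, m)) (b : B) : Prop :=
  exists c : {ffun {ffun 'I_m -> 'I_k} -> B},
    b = \sum_(f : {ffun 'I_m -> 'I_k}) c f * \det (rowsub f A).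

(* Fitt_B(N) = I : the 0th Fitting ideal of N (computed from any finite presentation;
   it is independent of the presentation) is the ideal I. *)
Definition Fitt0_is (B : comPzRingType) (N : lmodType B) (I : B -> Prop) : Prop :=
  forall (k m : nat) (A : 'M[B]_(k, m)) (g : {linear 'rV[B]_m -> N}),
    is_presentation A g -> forall b, minor_ideal A b <-> I b.

Definition principal_ideal (B : comPzRingType) (x : B) (b : B) : Prop :=
  exists r, b = r * x.

Definition non_zerodivisor (B : comPzRingType) (x : B) : Prop :=
  forall b, x * b = 0 -> b = 0.

Definition has_card (T : eqType) (c : nat) : Prop :=
  exists s : seq T, uniq s /\ (forall t, t \in s) /\ size s = c.

Definition quot_card (B : comPzRingType) (x : B) (c : nat) : Prop :=
  exists s : seq B,
    [/\ size s = c,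
        (forall i j, (i < c)%N -> (j < c)%N -> principal_ideal x (s`_i - s`_j) -> i = j)
      & (forall b, exists2 i, (i < c)%N & principal_ideal x (b - s`_i))].

(* Main.v *)
Require Import Defs.
From HB Require Import structures.
From mathcomp Require Import all_boot all_order all_algebra.
From Stdlib Require Import ClassicalEpsilon.
Set Implicit Arguments. Unset Strict Implicit. Unset Printing Implicit Defensive.
Import GRing.Theory.
Local Open Scope ring_scope.

Definition cid := constructive_indefinite_description.
Definition pb (P : Prop) : bool := if excluded_middle_informative P then true else false.
Lemma pbP P : reflect P (pb P).
Proof. by rewrite /pb; case: excluded_middle_informative => h; constructor. Qed.

Section Idx.
Variable G : zmodType.
Definition subgrp (K : G -> Prop) := K 0 /\ forall a b, K a -> K b -> K (a - b).
Definition idx (H K : G -> Prop) (n : nat) :=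
  exists (I : finType) (s : I -> G), [/\ #|I| = n, forall i, H (s i),
     forall i j, K (s i - s j) -> i = j & forall g, H g -> exists i, K (g - s i)].

Variable K : G -> Prop.
Hypothesis sK : subgrp K.
Lemma sgN a : K a -> K (- a).
Proof. by case: sK => K0 KB Ka; rewrite -sub0r; apply: KB. Qed.
Lemma sgD a b : K a -> K b -> K (a + b).
Proof. by case: sK => K0 KB Ka Kb; rewrite -[b]opprK; apply: KB => //; apply: sgN. Qed.
Lemma sgB a b : K a -> K b -> K (a - b).
Proof. by case: sK => K0 KB; apply: KB. Qed.
Lemma sg0 : K 0. Proof. by case: sK. Qed.
Lemma sgsym a b : K (a - b) -> K (b - a).
Proof. by move=> h; rewrite -opprB; apply: sgN. Qed.
Lemma sgtr a b c : K (a - b) -> K (b - c) -> K (a - c).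
Proof. by move=> h1 h2; have := sgD h1 h2; rewrite addrA subrK. Qed.

Lemma idx_le H n1 n2 : idx H K n1 -> idx H K n2 -> (n1 <= n2)%N.
Proof.
case=> [I [s [<- Hs ds cs]]] [J [t [<- Ht dt ct]]].
pose f i := proj1_sig (cid (ct _ (Hs i))).
have fP i : K (s i - t (f i)) by rewrite /f; case: cid.
apply: (@leq_card _ _ f) => i j fij; apply: ds.
by apply: (sgtr (fP i)); rewrite fij; apply: sgsym.
Qed.

Lemma idx_uniq H n1 n2 : idx H K n1 -> idx H K n2 -> n1 = n2.
Proof. by move=> h1 h2; apply/eqP; rewrite eqn_leq (idx_le h1 h2) (idx_le h2 h1). Qed.

Lemma idx_cover H (I : finType) (f : I -> G) :
  (forall g, H g -> exists i, K (g - f i)) -> exists n, idx H K n.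
Proof.
move=> cov.
pose touch i := exists g, H g /\ K (g - f i).
pose rk (i : I) := nat_of_ord (enum_rank i).
pose minimal i := touch i /\ forall j, touch j -> K (f i - f j) -> (rk i <= rk j)%N.
pose J : finType := {i : I | pb (minimal i)}.
have minJ (j : J) : minimal (val j) by apply/pbP; exact: (valP j).
pose s (j : J) := proj1_sig (cid (minJ j).1).
have sP j : H (s j) /\ K (s j - f (val j)) by rewrite /s; case: cid.
exists #|J|, J, s; split => //.
- by move=> j; case: (sP j).
- move=> j j' hK; apply: val_inj.
  have e : K (f (val j) - f (val j')).
    apply: (sgtr (sgsym (sP j).2)); apply: (sgtr hK); exact: (sP j').2.
  have l1 := (minJ j).2 _ (minJ j').1 e.
  have l2 := (minJ j').2 _ (minJ j).1 (sgsym e).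
  apply: enum_rank_inj; apply: val_inj; apply/eqP; rewrite eqn_leq.
  by rewrite l1 l2.
- move=> g Hg; case: (cov g Hg) => i0 Ki0.
  pose P k := pb (exists i, rk i = k /\ touch i /\ K (f i - f i0)).
  have exP : exists k, P k.
    exists (rk i0); apply/pbP; exists i0; split=> //; split; last by rewrite subrr; exact: sg0.
    by exists g.
  case: (ex_minnP exP) => k /pbP [i [rki [ti Ki]]] kmin.
  have mi : minimal i.
    split=> // j tj Kij; rewrite rki; apply: kmin; apply/pbP; exists j; split=> //; split=> //.
    by apply: (sgtr (sgsym Kij)).
  have jP : pb (minimal i) by apply/pbP.
  exists (exist _ i jP).
  apply: (sgtr Ki0); apply: (sgtr (sgsym Ki)); apply: sgsym; exact: (sP (exist _ i jP)).2.
Qed.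

Lemma idx_ext H H' K' n : (forall g, H g <-> H' g) -> (forall g, K g <-> K' g) ->
  idx H K n -> idx H' K' n.
Proof.
move=> eH eK [I [s [c Hs ds cs]]]; exists I, s; split => //.
- by move=> i; apply/eH.
- by move=> i j /eK; apply: ds.
- by move=> g /eH /cs [i /eK]; exists i.
Qed.

Lemma idx_one : idx K K 1.
Proof.
exists unit, (fun _ => 0); split => //; first by rewrite card_unit.
by move=> _; exact: sg0.
by move=> [] [].
by move=> g Kg; exists tt; rewrite subr0.
Qed.

Lemma idx_ord H n : idx H K n -> exists s : 'I_n -> G,
  [/\ forall i, H (s i), forall i j, K (s i - s j) -> i = j
    & forall g, H g -> exists i, K (g - s i)].
Proof.
case=> [I [s [<- Hs ds cs]]]; exists (fun k => s (enum_val k)); split => //.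
- by move=> i j /ds /enum_val_inj.
- by move=> g /cs [i Ki]; exists (enum_rank i); rewrite enum_rankK.
Qed.
End Idx.

Section Tower.
Variable G : zmodType.
Variables (G' H K : G -> Prop).
Hypotheses (sG : subgrp G') (sH : subgrp H) (sK : subgrp K).
Hypotheses (KH : forall g, K g -> H g) (HG : forall g, H g -> G' g).

Lemma idx_tower a b : idx G' H a -> idx H K b -> idx G' K (a * b).
Proof.
case=> [I [s [<- Hs ds cs]]] [J [t [<- Ht dt ct]]].
exists (prod I J), (fun p => s p.1 + t p.2); split.
- by rewrite card_prod.
- by move=> [i j] /=; apply: sgD => //; apply: HG.
- move=> [i j] [i' j'] /= h.
  have e : s i + t j - (s i' + t j') = (s i - s i') + (t j - t j') by rewrite opprD addrACA.
  rewrite e in h.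
  have ii : i = i'.
    apply: ds; rewrite -(addrK (t j - t j') (s i - s i')).
    by apply: (sgB sH); [apply: KH | apply: (sgB sH); apply: Ht].
  by subst i'; congr (_, _); apply: dt; move: h; rewrite subrr add0r.
- move=> g Gg; case: (cs g Gg) => i Hi; case: (ct _ Hi) => j Kj.
  by exists (i, j); rewrite /= opprD addrA.
Qed.

Lemma idx_tower_ex N : idx G' K N -> (exists a, idx G' H a) /\ (exists b, idx H K b).
Proof.
case=> [I [s [_ Gs ds cs]]]; split.
- apply: (idx_cover sH (f := s)) => g /cs [i Ki]; exists i; exact: KH.
- apply: (idx_cover sK (f := s)) => g /HG /cs [i Ki]; exists i; exact: Ki.
Qed.

Lemma idx_tower_div N a : idx G' K N -> idx G' H a -> exists b, idx H K b /\ N = (a * b)%N.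
Proof.
move=> hN ha; case: (idx_tower_ex hN) => _ [b hb]; exists b; split => //.
exact: (idx_uniq sK hN (idx_tower ha hb)).
Qed.
End Tower.

Section Iso.
Variables (G1 G2 : zmodType) (f : {additive G1 -> G2}).
Variables (H K : G1 -> Prop).
Hypotheses (sH : subgrp H) (sK : subgrp K) (KH : forall g, K g -> H g).
Hypothesis kerK : forall x, H x -> f x = 0 -> K x.
Definition img (P : G1 -> Prop) (y : G2) := exists x, P x /\ y = f x.

Lemma img_sub : subgrp (img K).
Proof.
split; first by exists 0; rewrite raddf0; split => //; exact: sg0.
by move=> _ _ [a [Ka ->]] [b [Kb ->]]; exists (a - b); rewrite raddfB; split => //; apply: sgB.
Qed.

Lemma idx_iso n : idx H K n <-> idx (img H) (img K) n.
Proof.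
split.
- case=> [I [s [<- Hs ds cs]]]; exists I, (fun i => f (s i)); split => //.
  + by move=> i; exists (s i).
  + move=> i j [x [Kx e]]; apply: ds.
    have h0 : f (s i - s j - x) = 0 by rewrite !raddfB /= e subrr.
    have := kerK (sgB sH (sgB sH (Hs i) (Hs j)) (KH Kx)) h0 => k.
    by have := sgD sK k Kx; rewrite subrK.
  + move=> _ [x [Hx ->]]; case: (cs x Hx) => i Ki; exists i; exists (x - s i); split => //.
    by rewrite raddfB.
- case=> [I [t [<- Ht dt ct]]].
  pose s i := proj1_sig (cid (Ht i)).
  have sP i : H (s i) /\ t i = f (s i) by rewrite /s; case: cid.
  exists I, s; split => //.
  + by move=> i; case: (sP i).
  + move=> i j Kij; apply: dt; rewrite (sP i).2 (sP j).2; exists (s i - s j); split => //.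
    by rewrite raddfB.
  + move=> x Hx; case: (ct (f x)); first by exists x.
    move=> i [z [Kz e]]; exists i.
    have h0 : f (x - s i - z) = 0 by rewrite !raddfB /= -(sP i).2 -e subrr.
    have := kerK (sgB sH (sgB sH Hx (sP i).1) (KH Kz)) h0 => k.
    by have := sgD sK k Kz; rewrite subrK.
Qed.
End Iso.

Lemma idx_sub (G : zmodType) (H H1 K : G -> Prop) n : subgrp H1 -> subgrp K ->
  (forall g, H1 g -> H g) -> (forall h, H h -> exists h1, H1 h1 /\ K (h - h1)) ->
  idx H1 (fun g => H1 g /\ K g) n -> idx H K n.
Proof.
move=> sH1 sK H1H cov [I [s [c Hs ds cs]]]; exists I, s; split => //.
- by move=> i; apply: H1H.
- by move=> i j Kij; apply: ds; split => //; apply: (sgB sH1).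
- move=> g Hg; case: (cov g Hg) => h1 [H1h Kh]; case: (cs h1 H1h) => i [_ Ki].
  by exists i; apply: (sgtr sK Kh).
Qed.
Section DZ.
Variables (I : finType) (G : I -> zmodType).
Definition dz := {dffun forall i, G i}.
Definition dz0 : dz := finfun (fun i => 0).
Definition dzadd (a b : dz) : dz := finfun (fun i => a i + b i).
Definition dzopp (a : dz) : dz := finfun (fun i => - a i).
Lemma dzaddA : associative dzadd.
Proof. by move=> a b c; apply/ffunP=> i; rewrite !ffunE addrA. Qed.
Lemma dzaddC : commutative dzadd.
Proof. by move=> a b; apply/ffunP=> i; rewrite !ffunE addrC. Qed.
Lemma dzadd0 : left_id dz0 dzadd.
Proof. by move=> a; apply/ffunP=> i; rewrite !ffunE add0r. Qed.
Lemma dzaddN : left_inverse dz0 dzopp dzadd.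
Proof. by move=> a; apply/ffunP=> i; rewrite !ffunE addNr. Qed.
Definition Gc (i : I) : choiceType := G i.
HB.instance Definition _ := Choice.copy dz {dffun forall i, Gc i}.
HB.instance Definition _ := GRing.isZmodule.Build dz dzaddA dzaddC dzadd0 dzaddN.
Lemma dzBE (a b : dz) i : (a - b) i = a i - b i.
Proof. by rewrite !ffunE. Qed.
Lemma dz0E i : (0 : dz) i = 0. Proof. by rewrite ffunE. Qed.

Definition PH (P : forall i, G i -> Prop) (w : dz) := forall i, P i (w i).
Lemma subgrp_prod P : (forall i : I, subgrp (P i)) -> subgrp (PH P).
Proof.
move=> sP; split; first by move=> i; rewrite dz0E; exact: sg0.
by move=> a b Pa Pb i; rewrite dzBE; apply: sgB.
Qed.

Local Unset Implicit Arguments.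
Variables (H K : forall i, G i -> Prop).
Local Set Implicit Arguments.
Hypothesis sK : forall i : I, subgrp (K i).

Lemma prod_idx (n : I -> nat) : (forall i, idx (H i) (K i) (n i)) ->
  idx (PH H) (PH K) #|{dffun forall i, 'I_(n i)}|.
Proof.
move=> hn.
have h i := idx_ord (hn i).
pose s i := proj1_sig (cid (h i)).
have sP i := proj2_sig (cid (h i)).
exists {dffun forall i, 'I_(n i)}, (fun J : {dffun forall i, 'I_(n i)} => (finfun (fun i => s i (J i)) : dz)).
split => //.
- move=> J i; rewrite ffunE; case: (sP i) => hs _ _; exact: hs.
- move=> J J' hJ; apply/ffunP => i; case: (sP i) => _ ds _; apply: ds.
  by have := hJ i; rewrite dzBE !ffunE.
- move=> w Hw.
  have c i : exists k, K i (w i - s i k) by case: (sP i) => _ _ cs; apply: cs; apply: Hw.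
  exists (finfun (fun i => proj1_sig (cid (c i)))) => i.
  by rewrite dzBE !ffunE; case: cid.
Qed.

Hypothesis sH : forall i : I, subgrp (H i).
Lemma prod_idx_inv N : idx (PH H) (PH K) N -> forall i, exists n, idx (H i) (K i) n.
Proof.
case=> [J [s [_ Hs ds cs]]] i.
apply: (idx_cover (sK i) (f := fun k => s k i)) => y Hy.
pose w : dz := finfun (dfwith (fun j => (0 : G j)) y).
have Hw : PH H w.
  move=> j; rewrite ffunE; case: dfwithP => //= j' _; exact: sg0.
case: (cs w Hw) => k Kk; exists k.
by have := Kk i; rewrite dzBE ffunE dfwith_in.
Qed.
End DZ.
Lemma idx_pos (G : zmodType) (H K : G -> Prop) n : H 0 -> idx H K n -> (0 < n)%N.
Proof. by move=> H0 [I [s [<- _ _ cs]]]; case: (cs 0 H0) => i _; apply/card_gt0P; exists i. Qed.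

Lemma subgrpT (G : zmodType) : subgrp (fun _ : G => True).
Proof. by []. Qed.

Section BO.
Variables (V W : zmodType) (iota : {additive V -> W}) (f : {additive V -> V})
  (h : {additive W -> W}) (W0 : W -> Prop).
Hypotheses (sW0 : subgrp W0) (Wi : forall v, W0 (iota v)) (Wh : forall w, W0 w -> W0 (h w)).
Hypotheses (iinj : forall v, iota v = 0 -> v = 0) (hinj : forall w, W0 w -> h w = 0 -> w = 0).
Hypothesis comm : forall v, h (iota v) = iota (f v).
Variable q : nat.
Hypothesis hq : idx W0 (img iota (fun _ => True)) q.

Let T := fun _ : V => True.
Let IV := img iota T.
Let IFV := img iota (img f T).
Let HW := img h W0.
Let sFV : subgrp (img f T) := img_sub f (subgrpT V).
Let sIV : subgrp IV := img_sub iota (subgrpT V).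
Let sIFV : subgrp IFV := img_sub iota sFV.
Let sHW : subgrp HW := img_sub h sW0.
Let IFV_HW w : IFV w -> HW w.
Proof. by case=> _ [[u [_ ->]] ->]; exists (iota u); split => //; rewrite comm. Qed.
Let HW_W0 w : HW w -> W0 w. Proof. by case=> x [Wx ->]; apply: Wh. Qed.
Let IV_W0 w : IV w -> W0 w. Proof. by case=> x [_ ->]. Qed.
Let IFV_IV w : IFV w -> IV w. Proof. by case=> x [_ ->]; exists x. Qed.

Let hHI : idx HW IFV q.
Proof.
have kh : forall x, W0 x -> h x = 0 -> IV x.
  by move=> x Wx hx; rewrite (hinj Wx hx); exists 0; rewrite raddf0.
have := (idx_iso (f := h) sW0 sIV IV_W0 kh q).1 hq.
apply: idx_ext => // w; split.
  - by case=> _ [[v [_ ->]] ->]; rewrite comm; exists (f v); split => //; exists v.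
  - by case=> _ [[v [_ ->]] ->]; exists (iota v); split; [exists v | rewrite comm].
Qed.

Let qpos : (0 < q)%N.
Proof. by apply: (idx_pos _ hq); exact: sg0. Qed.

Lemma BO c : idx T (img f T) c <-> idx W0 HW c.
Proof.
have kerI : forall K : V -> Prop, K 0 -> forall x, T x -> iota x = 0 -> K x.
  by move=> K K0 x _ /iinj ->.
split => hc.
- have h1 := (idx_iso (f := iota) (subgrpT V) sFV (fun _ _ => I) (kerI _ (sg0 sFV)) c).1 hc.
  have h2 := idx_tower sW0 sIV IFV_IV IV_W0 hq h1.
  case: (idx_tower_ex sHW sIFV IFV_HW HW_W0 h2) => [[a ha] _].
  case: (idx_tower_div sW0 sHW sIFV IFV_HW HW_W0 h2 ha) => b [hb e].
  have eb := idx_uniq sIFV hb hHI; subst b.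
  suff -> : c = a by [].
  by apply/eqP; rewrite -(eqn_pmul2l qpos) e mulnC.
- have h2 := idx_tower sW0 sHW IFV_HW HW_W0 hc hHI.
  case: (idx_tower_div sW0 sIV sIFV IFV_IV IV_W0 h2 hq) => b [hb e].
  have eb : b = c by apply/eqP; rewrite -(eqn_pmul2l qpos) -e mulnC.
  subst b.
  exact: (idx_iso (f := iota) (subgrpT V) sFV (fun _ _ => I) (kerI _ (sg0 sFV)) c).2 hb.
Qed.
End BO.
From mathcomp Require Import ring.

Section RSdef.
Variable R : comPzRingType.
Definition RS m n (A : 'M[R]_(m, n)) (v : 'rV[R]_n) := exists u : 'rV_m, v = u *m A.
Definition TT n := fun _ : 'rV[R]_n => True.

Lemma RS_sub m n (A : 'M[R]_(m, n)) : subgrp (RS A).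
Proof.
split; first by exists 0; rewrite mul0mx.
by move=> _ _ [u ->] [w ->]; exists (u - w); rewrite mulmxBl.
Qed.

Lemma RS_rowop m n (E E' : 'M[R]_m) (A : 'M[R]_(m, n)) : E' *m E = 1%:M ->
  forall v, RS (E *m A) v <-> RS A v.
Proof.
move=> EE v; split.
- by case=> u ->; exists (u *m E); rewrite mulmxA.
- by case=> u ->; exists (u *m E'); rewrite mulmxA -(mulmxA u) EE mulmx1.
Qed.
End RSdef.

Section PID.
Variable R : idomainType.

Lemma sc_ideal (a b : R) : (exists r, a = r * b) -> (exists s, b = s * a) ->
  forall v, RS (a%:M : 'M_1) v <-> RS (b%:M : 'M_1) v.
Proof.
have H (x y : R) : (exists r, x = r * y) -> forall v, RS (x%:M : 'M_1) v -> RS (y%:M : 'M_1) v.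
  by move=> [r ->] v [u ->]; exists (u *m r%:M); rewrite scalar_mxM mulmxA.
by move=> h1 h2 v; split; apply: H.
Qed.

Lemma sc_mul (a b : R) n : a != 0 -> idx (@TT R 1) (RS ((a * b)%:M : 'M_1)) n ->
  exists n1 n2, [/\ idx (@TT R 1) (RS (a%:M : 'M_1)) n1,
                    idx (@TT R 1) (RS (b%:M : 'M_1)) n2 & n = (n1 * n2)%N].
Proof.
move=> a0 hn.
have KH v : RS ((a * b)%:M : 'M_1) v -> RS (a%:M : 'M_1) v.
  by case=> u ->; exists (u *m b%:M); rewrite -mulmxA -scalar_mxM mulrC.
case: (idx_tower_ex (RS_sub _) (RS_sub _) KH (fun _ _ => I) hn) => [[n1 h1] _].
case: (idx_tower_div (@subgrpT _) (RS_sub _) (RS_sub _) KH (fun _ _ => I) hn h1) => n2 [h2 e].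
exists n1, n2; split => //.
have kerK : forall x : 'rV[R]_1, TT x -> mulmxr (a%:M : 'M_1) x = 0 -> RS (b%:M : 'M_1) x.
  move=> x _ /=; rewrite mul_mx_scalar => /eqP; rewrite scalemx_eq0 (negPf a0) /= => /eqP ->.
  by exists 0; rewrite mul0mx.
apply: (idx_iso (f := mulmxr (a%:M : 'M_1)) (@subgrpT _) (RS_sub _) (fun _ _ => I) kerK n2).2.
apply: idx_ext h2 => v; split.
- by case=> u ->; exists u.
- by case=> u [_ ->]; exists u.
- by case=> u ->; exists (u *m b%:M); split; [exists u | rewrite /= -mulmxA -scalar_mxM mulrC].
- by case=> _ [[u ->] ->]; exists u; rewrite /= -mulmxA -scalar_mxM mulrC.
Qed.

Hypothesis pid : is_PID R.

Lemma bezout (a b : R) : exists u v a' b' g, [/\ g = u * a + v * b, a = a' * g & b = b' * g].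
Proof.
pose I y := exists r s, y = r * a + s * b.
have iI : is_ideal I.
  split.
  - by exists 0, 0; rewrite !mul0r addr0.
  - by move=> _ _ [r [s ->]] [r' [s' ->]]; exists (r + r'), (s + s'); ring.
  - by move=> _ [r [s ->]]; exists (- r), (- s); ring.
  - by move=> t _ [r [s ->]]; exists (t * r), (t * s); ring.
case: (pid iI) => g hg.
case: ((hg g).2 (ex_intro _ 1 (esym (mul1r g)))) => u [v eg].
case: ((hg a).1 (ex_intro _ 1 (ex_intro _ 0 _))) => [|a' ea]; first by ring.
case: ((hg b).1 (ex_intro _ 0 (ex_intro _ 1 _))) => [|b' eb]; first by ring.
by exists u, v, a', b', g.
Qed.

Definition ev m (q : 'I_m) : 'rV[R]_m := delta_mx 0 q.

Lemma step m (A : 'M[R]_m.+1) (j : 'I_m.+1) : j != 0 ->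
  exists F F' : 'M[R]_m.+1, [/\ F' *m F = 1%:M, (F *m A) j 0 = 0
     & forall i, i != 0 -> i != j -> row i (F *m A) = row i A].
Proof.
move=> j0.
case: (bezout (A 0 0) (A j 0)) => u [v [a' [b' [g [eg ea eb]]]]].
have [g0 | gn0] := eqVneq g 0.
  exists 1%:M, 1%:M; split; first by rewrite mulmx1.
  - by rewrite mul1mx eb g0 mulr0.
  - by move=> i _ _; rewrite mul1mx.
have e1 : u * a' + v * b' = 1.
  apply: (mulIf gn0); rewrite mul1r {2}eg ea eb; ring.
pose F := \matrix_(p < m.+1) (if p == 0 then u *: ev 0 + v *: ev j
   else if p == j then (- b') *: ev 0 + a' *: ev j else ev p).
pose F' := \matrix_(p < m.+1) (if p == 0 then a' *: ev 0 - v *: ev j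
   else if p == j then b' *: ev 0 + u *: ev j else ev p).
have rF p : row p F = (if p == 0 then u *: ev 0 + v *: ev j
   else if p == j then (- b') *: ev 0 + a' *: ev j else ev p) by rewrite rowK.
have rF' p : row p F' = (if p == 0 then a' *: ev 0 - v *: ev j
   else if p == j then b' *: ev 0 + u *: ev j else ev p) by rewrite rowK.
have evM n (q : 'I_m.+1) (M : 'M[R]_(m.+1, n)) : ev q *m M = row q M by rewrite rowE.
exists F, F'; split.
- apply/row_matrixP => p; rewrite row_mul rF' rowE mulmx1 -/(ev p).
  case: (eqVneq p 0) => [-> | p0].
    rewrite mulmxBl -!scalemxAl !evM !rF eqxx (negPf j0) eqxx.
    apply/matrixP => x y; rewrite !mxE.
    set X := ((x == 0) && (y == 0))%:R; set Y := ((x == 0) && (y == j))%:R.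
    by rewrite -[RHS]mul1r -e1; ring.
  case: (eqVneq p j) => [-> | pj].
    rewrite mulmxDl -!scalemxAl !evM !rF eqxx (negPf j0) eqxx.
    apply/matrixP => x y; rewrite !mxE.
    set X := ((x == 0) && (y == 0))%:R; set Y := ((x == 0) && (y == j))%:R.
    by rewrite -[RHS]mul1r -e1; ring.
  by rewrite evM rF (negPf p0) (negPf pj).
- have -> : (F *m A) j 0 = (row j (F *m A)) 0 0 by rewrite [RHS]mxE.
  rewrite row_mul rF (negPf j0) eqxx.
  rewrite mulmxDl -!scalemxAl !evM !mxE ea eb; ring.
- by move=> i i0 ij; rewrite row_mul rF (negPf i0) (negPf ij) evM.
Qed.

Lemma clear_col m (A : 'M[R]_m.+1) : exists E E' : 'M[R]_m.+1,
  E' *m E = 1%:M /\ forall i : 'I_m.+1, i != 0 -> (E *m A) i 0 = 0.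
Proof.
suff H : forall k, (k <= m)%N -> exists E E' : 'M[R]_m.+1, E' *m E = 1%:M /\
    forall i : 'I_m.+1, i != 0 -> (i <= k)%N -> (E *m A) i 0 = 0.
  case: (H m (leqnn m)) => E [E' [h1 h2]]; exists E, E'; split => // i i0.
  by apply: h2 => //; rewrite -ltnS.
elim=> [|k IH] km.
  exists 1%:M, 1%:M; split; first by rewrite mulmx1.
  move=> i i0; rewrite leqn0 => /eqP ik; case/eqP: i0; exact: val_inj.
case: (IH (ltnW km)) => E [E' [h1 h2]].
pose j : 'I_m.+1 := inord k.+1.
have vj : nat_of_ord j = k.+1 by rewrite inordK // ltnS.
have j0 : j != 0 by apply/eqP => e; have := congr1 (@nat_of_ord _) e; rewrite vj.
case: (step (E *m A) j0) => F [F' [hF hj hr]].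
exists (F *m E), (E' *m F'); split.
  by rewrite mulmxA -(mulmxA E') hF mulmx1 h1.
move=> i i0 ik; rewrite -mulmxA.
case: (eqVneq i j) => [-> // | ij].
have ik' : (i <= k)%N.
  by move: ik; rewrite leq_eqVlt ltnS => /orP [/eqP e | //]; case/eqP: ij; apply: ord_inj; rewrite vj.
have -> : (F *m (E *m A)) i 0 = (row i (F *m (E *m A))) 0 0 by rewrite [RHS]mxE.
by rewrite hr // mxE h2.
Qed.

Lemma block_idx m (g : R) (r : 'M[R]_(1, m)) (D : 'M[R]_m) a b : g != 0 ->
  idx (@TT R 1) (RS (g%:M : 'M_1)) a -> idx (@TT R m) (RS D) b ->
  idx (@TT R (1 + m)) (RS (block_mx (g%:M : 'M_1) r 0 D)) (a * b).
Proof.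
move=> g0 ha hb.
set T := block_mx _ _ _ _.
have Tmul u : u *m T = row_mx (lsubmx u *m g%:M) (lsubmx u *m r + rsubmx u *m D).
  by rewrite -{1}[u]hsubmxK mul_row_block mulmx0 addr0.
pose Hmid (v : 'rV[R]_(1 + m)) := RS (g%:M : 'M_1) (lsubmx v).
have sHmid : subgrp Hmid.
  split; first by rewrite /Hmid linear0; exact: (sg0 (RS_sub _)).
  by move=> x y hx hy; rewrite /Hmid linearB; apply: (sgB (RS_sub _)).
have ha' : idx (@TT R (1 + m)) Hmid a.
  have kerK : forall x, TT x -> lsubmx x = 0 -> Hmid x.
    by move=> x _ e; rewrite /Hmid e; exact: (sg0 (RS_sub _)).
  apply: (idx_iso (f := @lsubmx R 1 1 m) (@subgrpT _) sHmid (fun _ _ => I) kerK a).2.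
  apply: idx_ext ha => y; split.
  - by move=> _; exists (row_mx y 0); split => //; exact: (esym (row_mxKl _ _)).
  - by [].
  - move=> hy; exists (row_mx y 0); split; last exact: (esym (row_mxKl _ _)).
    by rewrite /Hmid (row_mxKl y (0 : 'rV_m)).
  - by case=> x [hx ->].
pose P := row_mx (0 : 'M[R]_(m, 1)) (1%:M : 'M_m).
have psiE z : z *m P = row_mx 0 z by rewrite mul_mx_row mulmx0 mulmx1.
pose H1 := img (mulmxr P) (@TT R m).
have sH1 : subgrp H1 := img_sub _ (@subgrpT _).
have hb' : idx Hmid (RS T) b.
  apply: (idx_sub sH1 (RS_sub _)).
  - by move=> _ [z [_ ->]]; rewrite /Hmid /= psiE row_mxKl; exact: (sg0 (RS_sub _)).
  - move=> v [t et]; exists (mulmxr P (rsubmx v - t *m r)); split; first by exists (rsubmx v - t *m r).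
    exists (row_mx t 0); rewrite Tmul row_mxKl row_mxKr mul0mx addr0 /= psiE -et.
    by rewrite -{1}[v]hsubmxK opp_row_mx add_row_mx oppr0 addr0 opprB addrC subrK.
  have kerK : forall x, TT x -> mulmxr P x = 0 -> RS D x.
    move=> x _ /=; rewrite psiE => e; have := congr1 rsubmx e.
    by rewrite row_mxKr linear0 => ->; exact: (sg0 (RS_sub _)).
  have := (idx_iso (f := mulmxr P) (@subgrpT _) (RS_sub D) (fun _ _ => I) kerK b).1 hb.
  apply: idx_ext => // y; split.
  - case=> _ [[u ->] ->]; split; first by exists (u *m D).
    by exists (row_mx 0 u); rewrite Tmul row_mxKl row_mxKr !mul0mx add0r /= psiE.
  - case=> [[z [_ ->]] [w ew]]; exists z; split; last by [].
    move: ew; rewrite /= psiE Tmul => /eq_row_mx [e1 e2].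
    have lw0 : lsubmx w = 0.
      move/esym: e1; rewrite mul_mx_scalar => /eqP; rewrite scalemx_eq0 (negPf g0) /=.
      by move/eqP.
    by exists (rsubmx w); rewrite e2 lw0 mul0mx add0r.
have KH v : RS T v -> Hmid v by case=> u ->; rewrite /Hmid Tmul row_mxKl; exists (lsubmx u).
exact: (idx_tower (@subgrpT _) sHmid KH (fun _ _ => I) ha' hb').
Qed.

Lemma pid_idx m (A : 'M[R]_m) n : \det A != 0 ->
  idx (@TT R 1) (RS ((\det A)%:M : 'M_1)) n -> idx (@TT R m) (RS A) n.
Proof.
elim: m A n => [|m IH] A n dA hn.
  rewrite det_mx00 in hn.
  have h1 : idx (@TT R 1) (RS (1%:M : 'M_1)) 1.
    apply: idx_ext (idx_one (@subgrpT _)) => // v; split => // _; by exists v; rewrite mulmx1.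
  have -> := idx_uniq (RS_sub _) hn h1.
  apply: idx_ext (idx_one (@subgrpT _)) => // v; split => // _; exists 0.
  by rewrite mul0mx; apply: thinmx0.
case: (clear_col A) => E [E' [hE hz]].
set A1 := E *m A in hz *.
have eA : A = E' *m A1 by rewrite /A1 mulmxA hE mul1mx.
have dA1 : \det A1 = \det E * \det A by rewrite det_mulmx.
have dA' : \det A = \det E' * \det A1 by rewrite {1}eA det_mulmx.
have hn1 : idx (@TT R 1) (RS ((\det A1)%:M : 'M_1)) n.
  by apply: idx_ext hn => // v; apply: sc_ideal; [exists (\det E') | exists (\det E)].
have eA1 : A1 = E *m A by [].
clearbody A1.
have l0 : lshift m (0 : 'I_1) = (0 : 'I_m.+1) by apply: val_inj.
have hA1 : A1 = block_mx ((A1 0 0)%:M : 'M_1) (ursubmx (A1 : 'M_(1 + m))) 0 (drsubmx (A1 : 'M_(1 + m))).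
  apply: (etrans (esym (submxK (A1 : 'M_(1 + m))))); congr block_mx.
  - by rewrite [LHS]mx11_scalar !mxE l0.
  - apply/matrixP => i j; rewrite !mxE (ord1 j) l0; apply: hz.
    by apply/eqP => /(congr1 (@nat_of_ord _)).
set D := drsubmx _ in hA1.
have dE : \det E != 0.
  apply/eqP => e; have := congr1 determinant hE; rewrite det_mulmx e mulr0 det1 => /eqP.
  by rewrite eq_sym oner_eq0.
have dA1' : \det A1 = A1 0 0 * \det D.
  by have := det_ublock ((A1 0 0)%:M : 'M_1) (ursubmx (A1 : 'M_(1 + m))) D; rewrite det_scalar1 -hA1.
have nz : A1 0 0 * \det D != 0 by rewrite -dA1' dA1 mulf_neq0.
have g0 : A1 0 0 != 0 by move: nz; rewrite mulf_eq0 negb_or => /andP [].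
have dD : \det D != 0 by move: nz; rewrite mulf_eq0 negb_or => /andP [].
rewrite dA1' in hn1.
case: (sc_mul g0 hn1) => n1 [n2 [h1 h2 ->]].
have := block_idx (ursubmx (A1 : 'M_(1 + m))) g0 h1 (IH D n2 dD h2).
rewrite -hA1; apply: idx_ext => // v.
rewrite eA1; exact: RS_rowop hE v.
Qed.
End PID.

Section Emb.
Variables (B : comPzRingType) (n : nat) (R : 'I_n -> idomainType)
  (phi : forall i, {rmorphism B -> R i}) (good : 'I_n -> bool) (mm : nat) (A : 'M[B]_mm).

Definition Gm (i : 'I_n) : zmodType := 'rV[R i]_mm.
Definition Wt := dz Gm.
Definition iota_fun (v : 'rV[B]_mm) : Wt :=
  finfun (fun i => if good i then (map_mx (phi i) v : Gm i) else 0).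
Fact iota_zmod : zmod_morphism iota_fun.
Proof.
move=> x y; apply/ffunP => i; rewrite !ffunE; case: (good i) => //=; last by rewrite subr0.
by rewrite map_mxB.
Qed.
HB.instance Definition _ := GRing.isZmodMorphism.Build _ _ iota_fun iota_zmod.

Definition h_fun (w : Wt) : Wt :=
  finfun (fun i => if good i then ((w i : 'rV_mm) *m map_mx (phi i) A : Gm i) else 0).
Fact h_zmod : zmod_morphism h_fun.
Proof.
move=> x y; apply/ffunP => i; rewrite !ffunE; case: (good i) => //=; last by rewrite subr0.
by rewrite mulmxBl.
Qed.
HB.instance Definition _ := GRing.isZmodMorphism.Build _ _ h_fun h_zmod.

Definition Hc (i : 'I_n) (y : Gm i) := ~~ good i -> y = 0.
Definition Kc (i : 'I_n) (y : Gm i) := (~~ good i -> y = 0) /\ RS (map_mx (phi i) A) y.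

Lemma sHc i : subgrp (@Hc i).
Proof.
split; first by [].
by move=> a b ha hb ng; rewrite (ha ng) (hb ng) subrr.
Qed.

Lemma sKc i : subgrp (@Kc i).
Proof.
split; first by split => //; exact: (sg0 (RS_sub _)).
move=> a b [ha ra] [hb rb]; split; last exact: (sgB (RS_sub _)).
by move=> ng; rewrite (ha ng) (hb ng) subrr.
Qed.

Lemma img_h_prod w : img h_fun (PH Hc) w <-> PH Kc w.
Proof.
split.
- case=> w' [Hw' ->] i; rewrite ffunE; split; first by case: (good i).
  case: (good i); last by exact: (sg0 (RS_sub _)).
  by exists (w' i).
- move=> Kw.
  have ch i : exists u : 'rV[R i]_mm, good i -> w i = u *m map_mx (phi i) A.
    case: (Kw i) => _ [u eu]; by exists u.
  pose u i := proj1_sig (cid (ch i)).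
  have hu i : good i -> w i = u i *m map_mx (phi i) A := proj2_sig (cid (ch i)).
  exists (finfun (fun i => if good i then (u i : Gm i) else 0) : Wt).
  split.
  + by move=> i; rewrite ffunE /Hc; case: (good i).
  + apply/ffunP => i; rewrite !ffunE; case gi: (good i).
    * by rewrite hu.
    * by case: (Kw i) => h _; rewrite h // gi.
Qed.
End Emb.

Section Main.
Variables (B : comPzRingType) (n : nat) (R : 'I_n -> idomainType)
  (phi : forall i, {rmorphism B -> R i}).
Hypothesis hinj : forall a b : B, (forall i, phi i a = phi i b) -> a = b.
Variables (k : nat) (F : 'I_k -> forall i, R i).
Hypothesis hF : forall y : forall i, R i, exists (j : 'I_k) (b : B), forall i, y i = F j i + phi i b.
Variable d : B.
Hypothesis dnzd : forall b, d * b = 0 -> b = 0.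
Let good i := phi i d != 0.

Lemma BOm mm (A : 'M[B]_mm) c : (forall i, good i -> \det (map_mx (phi i) A) != 0) ->
  idx (@TT B mm) (RS A) c <-> idx (PH (Hc good (mm:=mm))) (PH (Kc phi good A)) c.
Proof.
move=> hdet.
set iota := iota_fun phi good (mm:=mm).
set h := h_fun phi good A.
set W0 := PH (Hc good (mm:=mm)).
have sW0 : subgrp W0 by apply: subgrp_prod => i; exact: sHc.
have Wi v : W0 (iota v) by move=> i; rewrite /iota ffunE /Hc; case: (good i).
have Wh w : W0 w -> W0 (h w) by move=> _ i; rewrite /h ffunE /Hc; case: (good i).
have iinj v : iota v = 0 -> v = 0.
  move=> e; apply/matrixP => a l; rewrite [RHS]mxE.
  set b := v a l.
  have e2 : b * d = 0.
    apply: hinj => i; rewrite rmorphM rmorph0.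
    case gi: (good i).
    - have := congr1 (fun w : Wt R mm => w i) e; rewrite /= /iota ffunE gi dz0E.
      by move/matrixP/(_ a l); rewrite !mxE => ->; rewrite mul0r.
    - by move/negbFE/eqP: gi => ->; rewrite mulr0.
  by apply: dnzd; rewrite mulrC.
have hinj' w : W0 w -> h w = 0 -> w = 0.
  move=> Ww e; apply/ffunP => i; rewrite dz0E.
  case gi: (good i); last by apply: Ww; rewrite gi.
  have := congr1 (fun w : Wt R mm => w i) e; rewrite /= /h ffunE gi dz0E => e2.
  have := congr1 (mulmxr (\adj (map_mx (phi i) A))) e2.
  rewrite /= -mulmxA mul_mx_adj mul_mx_scalar mul0mx => /eqP.
  by rewrite scalemx_eq0 (negPf (hdet i gi)) /= => /eqP.
have comm v : h (iota v) = iota (mulmxr A v).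
  apply/ffunP => i; rewrite /h /iota !ffunE; case: (good i) => //.
  by rewrite map_mxM.
have [q hq] : exists q, idx W0 (img iota (fun _ => True)) q.
  pose f (J : {ffun 'I_mm -> 'I_k}) : Wt R mm :=
    finfun (fun i => if good i then (\row_l F (J l) i : Gm R mm i) else 0).
  apply: (idx_cover (img_sub iota (@subgrpT _)) (f := f)) => w Ww.
  have ch l : exists jb : 'I_k * B, forall i, (w i : 'rV_mm) 0 l = F jb.1 i + phi i jb.2.
    by case: (hF (fun i => (w i : 'rV_mm) 0 l)) => j [b hb]; exists (j, b).
  pose jb l := proj1_sig (cid (ch l)).
  have hjb l : forall i, (w i : 'rV_mm) 0 l = F (jb l).1 i + phi i (jb l).2 := proj2_sig (cid (ch l)).
  exists (finfun (fun l => (jb l).1)); exists (\row_l (jb l).2); split => //.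
  apply/ffunP => i; rewrite /iota /f !ffunE.
  case gi: (good i); last by rewrite (Ww i) ?subr0 // gi.
  apply/matrixP => a l; rewrite !mxE (ord1 a) hjb ffunE; ring.
have := BO sW0 Wi Wh iinj hinj' comm hq c.
move=> e; split => hc.
- apply: idx_ext (e.1 _) => // [w|]; first exact: img_h_prod.
  apply: idx_ext hc => // v; split; first by case=> u ->; exists u.
  by case=> u [_ ->]; exists u.
- have := e.2 (idx_ext (fun _ => iff_refl _) (fun w => iff_sym (img_h_prod phi good A w)) hc).
  apply: idx_ext => // v; split; first by case=> u [_ ->]; exists u.
  by case=> u ->; exists u.
Qed.
End Main.

Unset Implicit Arguments.
Set Strict Implicit.

Theorem lemma2p4 (B : comPzRingType) (n : nat) (R : 'I_n -> idomainType)
  (phi : forall i, {rmorphism B -> R i}) (N : lmodType B) (x : B) (c : nat) :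
  (forall i, is_PID (R i)) ->
  finite_index_subring_of_prod phi ->
  quadratically_presented N ->
  Fitt0_is N (principal_ideal x) ->
  non_zerodivisor x ->
  quot_card x c ->
  has_card N c.
Proof.
move=> hPID [hinj [k [F hF]]] [m [A [g [m1 [gsurj gker]]]]] hFitt hnzd [s [sz sdist scov]].
pose d := \det A.
have pres : is_presentation A g by split.
have rid : rowsub (fun i => [ffun i : 'I_m => i] i) A = A.
  by apply/matrixP => i j; rewrite mxE ffunE.
have md : minor_ideal A d.
  exists [ffun f => if f == [ffun i : 'I_m => i] then 1 else 0].
  rewrite (bigD1 [ffun i : 'I_m => i]) //= ffunE eqxx mul1r big1 ?addr0 ?rid //.
  by move=> f /negPf hf; rewrite ffunE hf mul0r.
have [r er] : principal_ideal x d by apply/(hFitt m m A g pres).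
have [s0 es0] : exists s0, x = s0 * d.
  have : minor_ideal A x by apply/(hFitt m m A g pres); exists 1; rewrite mul1r.
  case=> cf ->; exists (\sum_f cf f * \det (rowsub f (1%:M : 'M[B]_m))).
  rewrite big_distrl /=; apply: eq_bigr => f _.
  by rewrite rowsubE det_mulmx mulrA.
have dnzd : forall b, d * b = 0 -> b = 0.
  by move=> b e; apply: hnzd; rewrite es0 -mulrA e mulr0.
have hB : idx (fun _ : B => True) (principal_ideal x) c.
  exists 'I_c, (fun i : 'I_c => s`_i); split => //; first by rewrite card_ord.
  - by move=> i j h; apply: val_inj; apply: (sdist _ _ (ltn_ord i) (ltn_ord j) h).
  - by move=> b _; case: (scov b) => i ic hi; exists (Ordinal ic).
have sPx : subgrp (principal_ideal x).
  split; first by exists 0; rewrite mul0r.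
  by move=> _ _ [a ->] [b ->]; exists (a - b); rewrite mulrBl.
have hB1 : idx (@TT B 1) (RS ((d%:M) : 'M[B]_1)) c.
  have kerK : forall a : B, True -> (a%:M : 'M[B]_1) = 0 -> principal_ideal x a.
    move=> a _ e; exists 0; rewrite mul0r.
    by have := congr1 (fun M : 'M[B]_1 => M 0 0) e; rewrite !mxE.
  have := (idx_iso (f := @scalar_mx B 1) (@subgrpT _) sPx (fun _ _ => I) kerK c).1 hB.
  have eH : forall y : 'M[B]_1, img (@scalar_mx B 1) (fun _ => True) y <-> TT y.
    move=> y; split => // _; exists (y 0 0); split => //; exact: mx11_scalar.
  have eK : forall y : 'M[B]_1, img (@scalar_mx B 1) (principal_ideal x) y <-> RS (d%:M : 'M[B]_1) y.
    move=> y; split.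
    - case=> a [[t ->] ->]; exists ((t * s0)%:M).
      by rewrite -scalar_mxM es0 mulrA.
    - case=> u ->; exists (u 0 0 * d); split; first by exists (u 0 0 * r); rewrite er mulrA.
      by rewrite /= {1}[u]mx11_scalar -scalar_mxM.
  exact: idx_ext eH eK.
pose good i := phi i d != 0.
have hd1 : forall i, good i -> \det (map_mx (phi i) (d%:M : 'M[B]_1)) != 0.
  by move=> i gi; rewrite map_scalar_mx det_scalar1.
have hdA : forall i, good i -> \det (map_mx (phi i) A) != 0.
  by move=> i gi; rewrite det_map_mx.
have P1 := (BOm hinj hF dnzd c hd1).1 hB1.
have sK1 i := sKc phi good (d%:M : 'M[B]_1) i.
have sH1 i := sHc R good 1 i.
have ex := prod_idx_inv sK1 sH1 P1.
pose nn i := proj1_sig (cid (ex i)).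
have hnn i : idx (Hc good (i := i)) (Kc phi good (d%:M : 'M[B]_1) (i := i)) (nn i) := proj2_sig (cid (ex i)).
have ec := idx_uniq (subgrp_prod sK1) P1 (prod_idx hnn).
have hA i : idx (Hc good (mm := m) (i := i)) (Kc phi good A (i := i)) (nn i).
  case gi : (good i).
  - have e1 : forall mm (y : 'rV[R i]_mm), Hc good y <-> TT y.
      by move=> mm y; split => // _; rewrite /Hc gi.
    have eK1 : forall y : 'rV[R i]_1, Kc phi good (d%:M : 'M[B]_1) y <->
        RS ((\det (map_mx (phi i) A))%:M : 'M[R i]_1) y.
      move=> y; rewrite /Kc det_map_mx map_scalar_mx; split; first by case.
      by move=> h; split => //; rewrite gi.
    have h' := idx_ext (e1 1) eK1 (hnn i).
    have := pid_idx (hPID i) (hdA i gi) h'.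
    apply: idx_ext => y; first by apply: iff_sym; exact: e1.
    by split; [move=> h; split => //; rewrite gi | case].
  - have eH0 : forall mm (y : 'rV[R i]_mm), Hc good y <-> y = 0.
      by move=> mm y; split; [apply; rewrite gi | move=> -> _].
    have eKH : forall mm (M : 'M[B]_mm) (y : 'rV[R i]_mm), Hc good y <-> Kc phi good M y.
      move=> mm M y; split; last by case.
      move=> h; split => //; rewrite (h _); last by rewrite gi.
      exact: (sg0 (RS_sub _)).
    have one1 := idx_ext (fun y => iff_refl _) (eKH 1 (d%:M)) (idx_one (sHc R good 1 i)).
    have -> := idx_uniq (sK1 i) (hnn i) one1.
    exact: idx_ext (fun y => iff_refl _) (eKH m A) (idx_one (sHc R good m i)).
have PA := prod_idx hA.
rewrite -ec in PA.
have hRS := (BOm hinj hF dnzd c hdA).2 PA.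
case: (idx_ord hRS) => sv [_ dsv csv].
exists [seq g (sv i) | i <- enum 'I_c]; split.
- rewrite map_inj_uniq ?enum_uniq // => i j e.
  by apply: dsv; apply/gker; rewrite linearB /= e subrr.
- split; last by rewrite size_map size_enum_ord.
  move=> t; case: (gsurj t) => v <-; case: (csv v I) => i [u eu].
  apply/mapP; exists i; first by rewrite mem_enum.
  by apply/eqP; rewrite -subr_eq0 -linearB; apply/eqP/gker; exists u.
Qed.
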